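(* Let $A\subset\mathbb{Z}^d$ be finite with $\mathbb{Z}$-linear span $\mathbb{Z}^d$, $f=\bigoplus_{i\in A}p_i\odot w^i$ a tropical polynomial with support $A$, and $q\in\mathcal{T}(f)$ a point lying in the relative interior of a cell $\sigma^*$ of $\mathcal{T}(f)$ whose dual marked cell $\sigma$ is a pyramid. Then $q$ is not a singular point of $\mathcal{T}(f)$. In particular, if the marked coherent subdivision $\Pi_p$ is a triangulation, then $\mathcal{T}(f)$ is non-singular.
   Context: $\mathbb{K}$ is an algebraically closed field of characteristic $0$ with a rank-one non-archimedean valuation $val$ whose residue field has characteristic $0$. Tropical operations $\oplus=\min$, $\odot=+$; $f(w)=\min_{i\in A}(p_i+\langle i,w\rangle)$, all $p_i\in\mathbb{R}$; $\mathcal{T}(f)$ is the set of $w$ where this minimum is attained for at least two distinct $i$. A point $q\in\mathcal{T}(f)$ is singular if there exist $F=\sum_{i\in A}a_ix^i$ over $\mathbb{K}$ with $val(a_i)=p_i$ for all $i$ and $b\in(\mathbb{K}^* )^d$ with $val(b)=q$ such that $F(b)=0$ and all $\partial F/\partial x_j(b)=0$; $\mathcal{T}(f)$ is non-singular if it has no singular point. For $q\in\mathbb{R}^d$ let $\sigma_q=\{i\in A: p_i+\langle i,q\rangle=f(q)\}$. The marked coherent subdivision $\Pi_p$ of the convex hull of $A$ is the collection of the sets $\sigma_q$, $q\in\mathbb{R}^d$ (its marked cells). For a marked cell $\sigma$, its dual cell $\sigma^*$ is the closure of $\{q:\sigma_q=\sigma\}$, and $q$ lies in the relative interior of $\sigma^*$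 iff $\sigma_q=\sigma$. A finite set $\sigma\subset\mathbb{R}^d$ is a pyramid if some $i\in\sigma$ does not lie in the affine span of $\sigma\setminus\{i\}$. $\Pi_p$ is a triangulation if every marked cell is affinely independent. *)

(* Defs.v *)
From HB Require Import structures.
From mathcomp Require Import all_boot all_order all_algebra.
From mathcomp Require Import reals.
Set Implicit Arguments. Unset Strict Implicit. Unset Printing Implicit Defensive.
Import Order.TTheory GRing.Theory Num.Theory.
Local Open Scope ring_scope.

(* A rank-one (real-valued) non-archimedean valuation on K, given on K^*
   (val 0 = +oo is implicit: the value of val at 0 is irrelevant). *)
Definition is_nonarch_valuation (R : realType) (K : fieldType) (val : K -> R) :=
  (forall x y : K, x != 0 -> y != 0 -> val (x * y) = val x + val y) /\
  (forall x y : K, x != 0 -> y != 0 -> x + y != 0 ->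
      Num.min (val x) (val y) <= val (x + y)).

(* The residue field O/m has characteristic 0, where
   O = {x | x = 0 \/ val x >= 0},  m = {x | x = 0 \/ val x > 0}:
   for every n >= 1, n*1 does not lie in the maximal ideal m. *)
Definition residue_char0 (R : realType) (K : fieldType) (val : K -> R) :=
  forall n : nat, (0 < n)%N -> ~ ((n%:R : K) = 0 \/ 0 < val (n%:R : K)).

Definition intvR (R : realType) (d : nat) (i : 'rV[int]_d) : 'rV[R]_d :=
  map_mx (fun z : int => z%:~R) i.

Definition Zspan_full (d : nat) (A : seq 'rV[int]_d) :=
  forall v : 'rV[int]_d, exists c : 'rV[int]_d -> int,
    v = \sum_(i <- A) c i *: i.

Definition in_affine_span (R : realType) (d : nat) (S : seq 'rV[int]_d)
    (x : 'rV[int]_d) :=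
  exists c : 'rV[int]_d -> R,
    \sum_(s <- S) c s = 1 /\ intvR R x = \sum_(s <- S) c s *: intvR R s.

Definition pyramid (R : realType) (d : nat) (sigma : seq 'rV[int]_d) :=
  exists2 i, i \in sigma & ~ in_affine_span R [seq j <- sigma | j != i] i.

Definition aff_indep (R : realType) (d : nat) (sigma : seq 'rV[int]_d) :=
  forall c : 'rV[int]_d -> R,
    \sum_(s <- sigma) c s = 0 -> \sum_(s <- sigma) c s *: intvR R s = 0 ->
    forall s, s \in sigma -> c s = 0.

Definition trop_term (R : realType) (d : nat) (p : 'rV[int]_d -> R)
    (i : 'rV[int]_d) (w : 'rV[R]_d) : R :=
  p i + \sum_(j < d) (i 0 j)%:~R * w 0 j.

Definition sigma_q (R : realType) (d : nat) (A : seq 'rV[int]_d)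
    (p : 'rV[int]_d -> R) (q : 'rV[R]_d) : seq 'rV[int]_d :=
  [seq i <- A | all (fun j => trop_term p i q <= trop_term p j q) A].

Definition in_trop_hyp (R : realType) (d : nat) (A : seq 'rV[int]_d)
    (p : 'rV[int]_d -> R) (q : 'rV[R]_d) :=
  exists i j, [/\ i \in sigma_q A p q, j \in sigma_q A p q & i != j].

Definition is_triangulation (R : realType) (d : nat) (A : seq 'rV[int]_d)
    (p : 'rV[int]_d -> R) :=
  forall q : 'rV[R]_d, aff_indep R (sigma_q A p q).

Definition monom (K : fieldType) (d : nat) (b : 'rV[K]_d) (i : 'rV[int]_d) : K :=
  \prod_(k < d) (b 0 k) ^ (i 0 k).

Definition lpoly_eval (K : fieldType) (d : nat) (A : seq 'rV[int]_d)
    (a : 'rV[int]_d -> K) (b : 'rV[K]_d) : K :=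
  \sum_(i <- A) a i * monom b i.

Definition lpoly_deriv_eval (K : fieldType) (d : nat) (A : seq 'rV[int]_d)
    (a : 'rV[int]_d -> K) (j : 'I_d) (b : 'rV[K]_d) : K :=
  \sum_(i <- A) a i * (i 0 j)%:~R *
     \prod_(k < d) (b 0 k) ^ (i 0 k - (k == j)%:Z).

Definition singular_point (R : realType) (K : fieldType) (val : K -> R)
    (d : nat) (A : seq 'rV[int]_d) (p : 'rV[int]_d -> R) (q : 'rV[R]_d) :=
  in_trop_hyp A p q /\
  exists (a : 'rV[int]_d -> K) (b : 'rV[K]_d),
    [/\ forall i, i \in A -> a i != 0 /\ val (a i) = p i,
        forall k : 'I_d, b 0 k != 0 /\ val (b 0 k) = q 0 k,
        lpoly_eval A a b = 0 &
        forall j : 'I_d, lpoly_deriv_eval A a j b = 0].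

Definition trop_nonsingular (R : realType) (K : fieldType) (val : K -> R)
    (d : nat) (A : seq 'rV[int]_d) (p : 'rV[int]_d -> R) :=
  forall q : 'rV[R]_d, ~ singular_point val A p q.

(* Main.v *)
Require Import Defs.
From HB Require Import structures.
From mathcomp Require Import all_boot all_order all_algebra.
From mathcomp Require Import reals.
From mathcomp Require Import lra ring.
Import Order.TTheory GRing.Theory Num.Theory.
Set Implicit Arguments. Unset Strict Implicit.
Local Open Scope ring_scope.

Lemma nv_val_one (R : realType) (K : fieldType) (val : K -> R)
  (hval : is_nonarch_valuation val) : val 1 = 0.
Proof.
case: hval => hM _; have := hM 1 1 (oner_neq0 _) (oner_neq0 _).
by rewrite mulr1 => h; lra.
Qed.

Lemma nv_valN1 (R : realType) (K : fieldType) (val : K -> R)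
  (hval : is_nonarch_valuation val) : val (-1) = 0.
Proof.
have h1 := nv_val_one hval; case: hval => hM _.
have hn : (-1 : K) != 0 by rewrite oppr_eq0 oner_neq0.
have := hM _ _ hn hn; rewrite mulrNN mulr1 h1 => h; lra.
Qed.

Lemma nv_valN (R : realType) (K : fieldType) (val : K -> R)
  (hval : is_nonarch_valuation val) (x : K) : x != 0 -> val (- x) = val x.
Proof.
move=> hx; have h1 := nv_valN1 hval; case: hval => hM _.
have hn : (-1 : K) != 0 by rewrite oppr_eq0 oner_neq0.
by rewrite -mulN1r hM // h1 add0r.
Qed.

Lemma nv_valM (R : realType) (K : fieldType) (val : K -> R)
  (hval : is_nonarch_valuation val) (x y : K) : x != 0 -> y != 0 ->
  val (x * y) = val x + val y.
Proof. by case: hval => hM _; apply: hM. Qed.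

Lemma nv_valV (R : realType) (K : fieldType) (val : K -> R)
  (hval : is_nonarch_valuation val) (x : K) : x != 0 -> val (x^-1) = - val x.
Proof.
move=> hx; have := nv_valM hval hx (invr_neq0 hx).
rewrite mulfV // nv_val_one // => h; lra.
Qed.

Lemma nv_valXn (R : realType) (K : fieldType) (val : K -> R)
  (hval : is_nonarch_valuation val) (x : K) (n : nat) : x != 0 ->
  val (x ^+ n) = n%:R * val x.
Proof.
move=> hx; elim: n => [|n IH]; first by rewrite expr0 nv_val_one // mul0r.
by rewrite exprS nv_valM ?expf_neq0 // IH mulrSr mulrDl mul1r addrC.
Qed.

Lemma nv_valXz (R : realType) (K : fieldType) (val : K -> R)
  (hval : is_nonarch_valuation val) (x : K) (z : int) : x != 0 ->
  x ^ z != 0 /\ val (x ^ z) = z%:~R * val x.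
Proof.
move=> hx; case: z => n.
  by rewrite -exprnP expf_neq0 // nv_valXn.
rewrite NegzE -exprnN invr_eq0 expf_neq0 //; split=> //.
by rewrite nv_valV ?expf_neq0 // nv_valXn // mulrNz mulNr.
Qed.

Lemma nv_valn (R : realType) (K : fieldType) (val : K -> R)
  (hval : is_nonarch_valuation val) (hres : residue_char0 val) (n : nat) :
  (0 < n)%N -> (n%:R : K) != 0 /\ val (n%:R : K) = 0.
Proof.
move=> hn; have hnz : forall m, (0 < m)%N -> (m%:R : K) != 0.
  by move=> m hm; apply/eqP => h; apply: (hres m hm); left.
split; first exact: hnz.
have ge : forall m, (0 < m)%N -> 0 <= val (m%:R : K).
  case=> // m _; elim: m => [|m IH]; first by rewrite nv_val_one.
  have [_ hA] := hval.
  have := hA (m.+1%:R) 1 (hnz m.+1 isT) (oner_neq0 _).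
  rewrite -mulrSr => /(_ (hnz m.+2 isT)).
  move=> h; apply: le_trans h; rewrite le_min IH nv_val_one //=.
apply/eqP; rewrite eq_le ge // andbT leNgt; apply/negP => h.
by apply: (hres n hn); right.
Qed.

Lemma nv_valz (R : realType) (K : fieldType) (val : K -> R)
  (hval : is_nonarch_valuation val) (hres : residue_char0 val) (z : int) :
  z != 0 -> (z%:~R : K) != 0 /\ val (z%:~R : K) = 0.
Proof.
case: z => n.
  by move=> hn; apply: nv_valn => //; rewrite lt0n; apply: contra hn => /eqP ->.
move=> _; rewrite NegzE mulrNz.
have [h1 h2] := nv_valn hval hres (ltn0Sn n).
by rewrite oppr_eq0 h1 nv_valN.
Qed.

Lemma nv_val_sum_gt (R : realType) (K : fieldType) (val : K -> R)
  (hval : is_nonarch_valuation val) (I : eqType) (r : seq I) (P : pred I)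
  (F : I -> K) (v0 : R) :
  (forall i, P i -> F i = 0 \/ (F i != 0 /\ v0 < val (F i))) ->
  let s := \sum_(i <- r | P i) F i in s = 0 \/ (s != 0 /\ v0 < val s).
Proof.
move=> hF /=; apply: (big_ind (fun x => x = 0 \/ (x != 0 /\ v0 < val x))) => //.
- by left.
- move=> x y [->|[hx vx]]; first by rewrite add0r.
  case=> [->|[hy vy]]; first by rewrite addr0; right.
  have [->|hxy] := eqVneq (x + y) 0; first by left.
  right; split=> //; case: hval => _ hA.
  by apply: (lt_le_trans _ (hA _ _ hx hy hxy)); rewrite lt_min vx vy.
Qed.

Lemma val_monom (R : realType) (K : fieldType) (val : K -> R)
  (hval : is_nonarch_valuation val) (d : nat) (b : 'rV[K]_d) (q : 'rV[R]_d)
  (hb : forall k : 'I_d, b 0 k != 0 /\ val (b 0 k) = q 0 k) (i : 'rV[int]_d) :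
  monom b i != 0 /\ val (monom b i) = \sum_(j < d) (i 0 j)%:~R * q 0 j.
Proof.
rewrite /monom.
apply: (big_ind2 (fun x y => x != 0 /\ val x = y)).
- by rewrite oner_neq0 nv_val_one.
- move=> x1 x2 y1 y2 [h1 e1] [h2 e2]; rewrite mulf_neq0 //; split=> //.
  by rewrite nv_valM // e1 e2.
- move=> k _; have [hk ek] := hb k.
  by have [h e] := nv_valXz hval (i 0 k) hk; rewrite e ek.
Qed.

Lemma deriv_monom (K : fieldType) (d : nat) (b : 'rV[K]_d) (i : 'rV[int]_d)
  (j : 'I_d) : (forall k : 'I_d, b 0 k != 0) ->
  (\prod_(k < d) (b 0 k) ^ (i 0 k - (k == j)%:Z)) * b 0 j = monom b i.
Proof.
move=> hb; rewrite /monom (bigD1 j) //= [RHS](bigD1 j) //= eqxx -mulrA.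
rewrite [_ * b 0 j]mulrC mulrA; congr (_ * _).
  by rewrite -[X in _ * X]expr1z -expfzDr // subrK.
by apply: eq_bigr => k /negbTE ->; rewrite subr0.
Qed.

Definition phiI (d : nat) (i : 'rV[int]_d) : 'rV[int]_(1 + d) :=
  row_mx (const_mx 1) i.

Definition ellZ (d : nat) (z : 'I_(1 + d) -> int) (i : 'rV[int]_d) : int :=
  \sum_(m < 1 + d) phiI i 0 m * z m.

Lemma ellZE (d : nat) (z : 'I_(1 + d) -> int) (i : 'rV[int]_d) :
  ellZ z i = z (lshift d ord0) + \sum_(k < d) i 0 k * z (rshift 1 k).
Proof.
rewrite /ellZ big_split_ord big_ord1 /phiI row_mxEl mxE mul1r; congr (_ + _).
by apply: eq_bigr => k _; rewrite row_mxEr.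
Qed.

Lemma core_relation (K : fieldType) (d : nat) (A : seq 'rV[int]_d)
  (a : 'rV[int]_d -> K) (b : 'rV[K]_d) (z : 'I_(1 + d) -> int) :
  (forall k : 'I_d, b 0 k != 0) ->
  lpoly_eval A a b = 0 -> (forall j : 'I_d, lpoly_deriv_eval A a j b = 0) ->
  \sum_(i <- A) a i * (ellZ z i)%:~R * monom b i = 0.
Proof.
move=> hb hF hD.
have hk : forall k : 'I_d, \sum_(i <- A) a i * (i 0 k)%:~R * monom b i = 0.
  move=> k; rewrite -[RHS](mul0r (b 0 k)) -[in RHS](hD k).
  rewrite /lpoly_deriv_eval mulr_suml.
  by apply: eq_bigr => i _; rewrite -[RHS]mulrA deriv_monom.
transitivity ((z (lshift d ord0))%:~R * lpoly_eval A a b +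
  \sum_(k < d) (z (rshift 1 k))%:~R *
      \sum_(i <- A) a i * (i 0 k)%:~R * monom b i); last first.
  by rewrite hF mulr0 add0r big1 // => k _; rewrite hk mulr0.
rewrite /lpoly_eval mulr_sumr.
under [X in _ + X]eq_bigr => k _ do rewrite mulr_sumr.
rewrite [X in _ + X]exchange_big /= -big_split /=.
apply: eq_bigr => i _.
rewrite ellZE rmorphD rmorph_sum /= mulrDr mulrDl mulrCA mulrA; congr (_ + _).
rewrite mulr_sumr mulr_suml; apply: eq_bigr => k _.
by rewrite rmorphM /=; ring.
Qed.

Definition phiQ (d : nat) (j : 'rV[int]_d) : 'rV[rat]_(1 + d) :=
  map_mx (fun z : int => z%:~R) (phiI j).

Lemma not_sub_rat (R : realType) (d : nat) (S : seq 'rV[int]_d)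
  (i0 : 'rV[int]_d) : uniq S -> ~ in_affine_span R S i0 ->
  ~~ (phiQ i0 <= \matrix_(r < size S) phiQ (nth 0 S r))%MS.
Proof.
move=> hS hna; apply/negP => /submxP [x hx]; apply: hna.
set n := size S.
pose xs := [seq x 0 r | r <- enum 'I_n].
exists (fun s => ratr (nth 0 xs (index s S))).
have hsum : forall G : 'rV[int]_d -> R,
   \sum_(s <- S) ratr (nth 0 xs (index s S)) * G s =
   \sum_(r < n) ratr (x 0 r) * G (nth 0 S r).
  move=> G; rewrite (big_nth 0) big_mkord; apply: eq_bigr => r _.
  rewrite index_uniq // (nth_map r) ?size_enum_ord //.
  by rewrite nth_ord_enum.
have hent : forall m, phiQ i0 0 m = \sum_(r < n) x 0 r * phiQ (nth 0 S r) 0 m.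
  by move=> m; rewrite hx mxE; apply: eq_bigr => r _; rewrite mxE.
split.
  transitivity (\sum_(s <- S) (ratr (nth 0 xs (index s S)) : R) * 1).
    by apply: eq_bigr => s _; rewrite mulr1.
  rewrite hsum; have := hent (lshift d ord0).
  rewrite /phiQ /phiI mxE row_mxEl mxE => h.
  have := congr1 (@ratr R) h; rewrite ratr_int => e.
  rewrite [RHS]e rmorph_sum; apply: eq_bigr => r _.
  by rewrite mxE row_mxEl mxE rmorphM /= ratr_int.
apply/rowP => k; rewrite summxE [LHS]mxE.
rewrite (eq_bigr (fun s => ratr (nth 0 xs (index s S)) * intvR R s 0 k)); last first.
  by move=> s _; rewrite mxE.
rewrite hsum; have := hent (rshift 1 k).
rewrite /phiQ /phiI mxE row_mxEr => h.
have := congr1 (@ratr R) h; rewrite ratr_int => ->.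
rewrite rmorph_sum; apply: eq_bigr => r _.
by rewrite rmorphM /= [in LHS]mxE row_mxEr ratr_int /intvR mxE.
Qed.

Lemma rat_sep (R : realType) (d : nat) (S : seq 'rV[int]_d)
  (i0 : 'rV[int]_d) : uniq S -> ~ in_affine_span R S i0 ->
  exists z : 'I_(1 + d) -> int,
    (forall j, j \in S -> ellZ z j = 0) /\ ellZ z i0 != 0.
Proof.
move=> hS hna; have hns := not_sub_rat hS hna.
set M := \matrix_(r < size S) phiQ (nth 0 S r) in hns.
set C := cokermx M.
have hC : phiQ i0 *m C != 0 by rewrite -submxE.
have [k hk] : exists k, (phiQ i0 *m C) 0 k != 0.
  case: (pickP (fun k => (phiQ i0 *m C) 0 k != 0)) => [k hk | h]; first by exists k.
  exfalso; move/negP: hC; apply; apply/eqP/rowP => k.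
  rewrite [RHS]mxE; move: (h k) => /= /negbFE /eqP. done.
pose g j := (phiQ j *m C) 0 k.
have gS : forall j, j \in S -> g j = 0.
  move=> j hj; rewrite /g -(nth_index 0 hj).
  have hr : (index j S < size S)%N by rewrite index_mem.
  have -> : phiQ (nth 0 S (index j S)) = row (Ordinal hr) M by rewrite rowK.
  by rewrite -row_mul /C mulmx_coker !mxE.
pose D := \prod_(m < 1 + d) denq (C m k).
pose z m := numq (C m k) * \prod_(m' < 1 + d | m' != m) denq (C m' k).
have hz : forall m, (z m)%:~R = D%:~R * C m k :> rat.
  move=> m; rewrite /z /D [in RHS](bigD1 m) //= !intrM numqE; ring.
have hD : D != 0.
  by rewrite /D; apply/prodf_neq0 => m _; apply: denq_neq0.
have hell : forall j, (ellZ z j)%:~R = D%:~R * g j :> rat.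
  move=> j; rewrite /ellZ rmorph_sum /g mxE mulr_sumr; apply: eq_bigr => m _.
  by rewrite rmorphM /= /phiQ [X in _ = _ * (X * _)]mxE hz; ring.
exists z; split.
  move=> j hj; apply/eqP; rewrite -(intr_eq0 rat) hell gS //.
  by rewrite mulr0.
by rewrite -(intr_eq0 rat) hell mulf_neq0 // intr_eq0.
Qed.

Lemma part1 (R : realType) (K : fieldType) (val : K -> R)
  (hval : is_nonarch_valuation val) (hres : residue_char0 val)
  (d : nat) (A : seq 'rV[int]_d) (hAuniq : uniq A)
  (p : 'rV[int]_d -> R) (q : 'rV[R]_d) :
  pyramid R (sigma_q A p q) -> ~ singular_point val A p q.
Proof.
move=> [i0 hi0 hna] [_ [a [b [ha hb hF hD]]]].
set sigma := sigma_q A p q in hi0 hna.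
have hsu : uniq sigma by rewrite filter_uniq.
set S := [seq j <- sigma | j != i0] in hna.
have [z [hzS hz0]] := rat_sep (filter_uniq _ hsu) hna.
have hb0 : forall k, b 0 k != 0 by move=> k; case: (hb k).
have rel := core_relation z hb0 hF hD.
move: hi0; rewrite mem_filter => /andP [hall hi0A].
rewrite (bigD1_seq i0) //= in rel.
set v0 := trop_term p i0 q.
pose t i := a i * (ellZ z i)%:~R * monom b i.
have tval : forall i, i \in A -> ellZ z i != 0 -> t i != 0 /\ val (t i) = trop_term p i q.
  move=> i hiA hzi; have [hai vai] := ha i hiA.
  have [hzn vz] := nv_valz hval hres hzi.
  have [hm vm] := val_monom hval hb i.
  rewrite /t !mulf_neq0 //; split=> //.
  by rewrite !nv_valM ?mulf_neq0 // vai vz vm addr0.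
have [t0n t0v] := tval i0 hi0A hz0.
rewrite big_seq_cond in rel.
have := @nv_val_sum_gt _ _ _ hval _ A (fun i => (i \in A) && (i != i0)) t v0.
case.
- move=> i /andP [hiA hne].
  have [ez|hzi] := eqVneq (ellZ z i) 0; first by left; rewrite /t ez mulr0 mul0r.
  right; have [tn tv] := tval i hiA hzi; split=> //; rewrite tv.
  have hni : i \notin sigma.
    apply: contra hzi => his; apply/eqP; apply: hzS.
    by rewrite mem_filter hne.
  move: hni; rewrite mem_filter hiA andbT => /allPn [j hjA].
  rewrite -ltNge => hlt; apply: le_lt_trans hlt.
  by move/allP: hall => /(_ j hjA).
- move=> /= hs0; move: rel; rewrite -/(t i0) hs0 addr0 => h.
  by move: t0n; rewrite h eqxx.
move=> /= [hsn hsv]; move: rel => /eqP; rewrite addr_eq0 => /eqP h.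
  move: t0v hsv hsn; rewrite /t h => t0v hsv hsn.
  by move: hsv; rewrite /v0 -t0v nv_valN // ltxx.
Qed.

Lemma tri_pyramid (R : realType) (d : nat) (A : seq 'rV[int]_d)
  (hAuniq : uniq A) (p : 'rV[int]_d -> R) (q : 'rV[R]_d) :
  is_triangulation A p -> in_trop_hyp A p q -> pyramid R (sigma_q A p q).
Proof.
move=> htri [i [j [hi hj hij]]]; exists i => // -[c [hc1 hcv]].
set sigma := sigma_q A p q in hi hc1 hcv.
have hsu : uniq sigma by rewrite filter_uniq.
pose c' s := if s == i then -1 else c s.
have h := htri q c'.
have e : forall F : 'rV[int]_d -> 'rV[R]_d,
    \sum_(s <- sigma) c' s *: F s =
    - F i + \sum_(s <- [seq j <- sigma | j != i]) c s *: F s.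
  move=> F; rewrite (bigD1_seq i) //= /c' eqxx scaleN1r big_filter.
  by congr (_ + _); apply: eq_bigr => s /negbTE ->.
have e1 : \sum_(s <- sigma) c' s = 0.
  rewrite big_filter in hc1; rewrite (bigD1_seq i) //= /c' eqxx.
  by rewrite (eq_bigr c) ?hc1 ?addNr // => s /negbTE ->.
have hv : \sum_(s <- sigma) c' s *: intvR R s = 0 by rewrite e -hcv addNr.
have := h e1 hv i hi; rewrite /c' eqxx => /eqP.
by rewrite oppr_eq0 oner_eq0.
Qed.

Theorem lemma3p1 (R : realType) (K : closedFieldType) (val : K -> R)
  (hval : is_nonarch_valuation val) (hchar : [pchar K] =i pred0)
  (hres : residue_char0 val)
  (d : nat) (A : seq 'rV[int]_d) (hAuniq : uniq A) (hspan : Zspan_full A)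
  (p : 'rV[int]_d -> R) :
  (forall q : 'rV[R]_d, in_trop_hyp A p q -> pyramid R (sigma_q A p q) ->
     ~ singular_point val A p q) /\
  (is_triangulation A p -> trop_nonsingular val A p).
Proof.
split.
  by move=> q _ hpy; apply: part1.
move=> htri q hs; apply: (part1 hval hres hAuniq (tri_pyramid hAuniq htri _) hs).
by case: hs.
Qed.
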